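(* Let $L$ be a finite unramified extension of $\mathbb Q_\ell$ with ring of integers $S$, let $f_1\in S[t]$ be monic of degree $d_1$ with $f_1\equiv t^{d_1}\pmod\ell$, $R=S[t]/f_1S[t]$, $x$ the image of $t$. Let $T$ be an $R$-module that is free of finite rank over $S$, generated over $R$ by $r$ elements, with $\mathrm{Hp}(x|T)=(m_1,\dots,m_r)$, and let $f$ be the characteristic polynomial of $x$ on $T$. Then there exist $r\times r$ matrices $X,Y$ over $S[t]$ with $YX=f_1\cdot I_r$ and $\det X=f$ such that $T$ has the presentation $S[t]^r\xrightarrow{X}S[t]^r\to T\to0$ and $X\equiv\mathrm{diag}(t^{m_1},\dots,t^{m_r})\pmod\ell$.
   Context: $\mathrm{Hp}(x|T)=(m_1,\dots,m_r)$ means that the nilpotent endomorphism of the $S/\ell S$-vector space $T/\ell T$ induced by $x$ has Jordan blocks of sizes $m_1\ge\dots\ge m_r$ (its Young polygon has vertices $(\sum_{j\le i}m_j,i)$). *)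

(* Defs.v *)
From HB Require Import structures.
From mathcomp Require Import all_boot all_order all_algebra.
Set Implicit Arguments. Unset Strict Implicit. Unset Printing Implicit Defensive.
Import Order.TTheory GRing.Theory Num.Theory.
Local Open Scope ring_scope.

Definition ldvd (S : comNzRingType) (l k : nat) (a : S) : Prop :=
  exists c : S, a = c * (l%:R ^+ k).

(* S is the ring of integers of a finite unramified extension L of Q_l, with
   residue field F = S / l S realised by the surjection pi with kernel l S:
   S is a domain of characteristic 0 (l <> 0 in S), every nonzero element is
   a unit times a power of l (DVR with uniformizer l, i.e. unramified),
   S is l-adically complete, and the residue field S/lS is finite. *)
Definition unram_int_ring (S : idomainType) (l : nat) (F : finFieldType)
    (pi : {rmorphism S -> F}) : Prop :=
  [/\ prime l, (l%:R : S) != 0 &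
   [/\
      (forall a : S, a != 0 ->
         exists k u, u \is a GRing.unit /\ a = u * l%:R ^+ k),
      (forall y : F, exists a : S, pi a = y),
      (forall a : S, pi a = 0 <-> ldvd l 1 a) &
      (forall s : nat -> S, (forall k, ldvd l k (s k.+1 - s k)) ->
         exists b : S, forall k, ldvd l k (b - s k))]].

(* Action of a polynomial p in x on a vector v of T = S^n (row vectors),
   where x acts by v |-> v *m A:  v . p(x) = sum_i p_i (v A^i). *)
Definition pact (S : comNzRingType) (n : nat) (A : 'M[S]_n)
    (v : 'rV[S]_n) (p : {poly S}) : 'rV[S]_n :=
  \sum_(i < size p) p`_i *: (v *m A ^+ i).

Definition block_start (r : nat) (m : 'I_r -> nat) (k : nat) : bool :=
  [exists s : 'I_r.+1, k == (\sum_(i < r | (i < s)%N) m i)%N].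

Definition nilJordan (F : nzRingType) (r n : nat) (m : 'I_r -> nat)
    : 'M[F]_n :=
  \matrix_(i < n, j < n) ((j == i.+1 :> nat) && ~~ block_start m j)%:R.

(* Hp(N) = (m_1,...,m_r): N is similar to the nilpotent Jordan matrix with
   blocks of sizes m_1 >= ... >= m_r (zero sizes allowed as padding). *)
Definition Hp (F : fieldType) (n r : nat) (N : 'M[F]_n) (m : 'I_r -> nat)
    : Prop :=
  [/\ (forall i j : 'I_r, (i <= j)%N -> (m j <= m i)%N),
      (\sum_(i < r) m i)%N = n &
      exists P : 'M[F]_n, P \in unitmx /\ P *m N *m invmx P = @nilJordan F r n m].

(* Main.v *)
Require Import Defs.
From HB Require Import structures.
From mathcomp Require Import all_boot all_order all_algebra.
From Stdlib Require Import Lia.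
Set Implicit Arguments. Unset Strict Implicit. Unset Printing Implicit Defensive.
Import GRing.Theory.
Local Open Scope ring_scope.

Section Pact.
Variable (S : comNzRingType) (n : nat) (A : 'M[S]_n).

Lemma pact_horner n' (A' : 'M[S]_n'.+1) v p : pact A' v p = v *m horner_mx A' p.
Proof.
have {2}-> : p = \sum_(i < size p) p`_i *: 'X^i by rewrite -poly_def coefK.
rewrite /pact linear_sum /= mulmx_sumr; apply: eq_bigr => i _.
by rewrite linearZ /= rmorphXn /= horner_mx_X scalemxAr.
Qed.

Lemma pactD v p q : pact A v (p + q) = pact A v p + pact A v q.
Proof.
case: n A v => [|n'] A' v; first by rewrite !thinmx0.
by rewrite !pact_horner rmorphD mulmxDr.
Qed.

Lemma pactM v p q : pact A v (p * q) = pact A (pact A v p) q.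
Proof.
case: n A v => [|n'] A' v; first by rewrite !thinmx0.
by rewrite !pact_horner rmorphM mulmxA.
Qed.

Lemma pactZ v c p : pact A v (c *: p) = c *: pact A v p.
Proof.
case: n A v => [|n'] A' v; first by rewrite !thinmx0.
by rewrite !pact_horner linearZ /= scalemxAr.
Qed.

Lemma pactC v c : pact A v c%:P = c *: v.
Proof.
case: n A v => [|n'] A' v; first by rewrite !thinmx0.
by rewrite !pact_horner horner_mx_C mul_mx_scalar.
Qed.

Lemma pactXn v j : pact A v 'X^j = v *m A ^+ j.
Proof.
case: n A v => [|n'] A' v; first by rewrite !thinmx0.
by rewrite !pact_horner rmorphXn /= horner_mx_X.
Qed.

Lemma pact0 v : pact A v 0 = 0.
Proof. by rewrite /pact size_poly0 big_ord0. Qed.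

Lemma pactN v p : pact A v (- p) = - pact A v p.
Proof. by rewrite -scaleN1r pactZ scaleN1r. Qed.

Lemma pact_sum v I (r : seq I) (P : pred I) (F : I -> {poly S}) :
  pact A v (\sum_(i <- r | P i) F i) = \sum_(i <- r | P i) pact A v (F i).
Proof. by elim/big_rec2: _ => [|i x y _ <-]; rewrite ?pact0 ?pactD. Qed.

Lemma pact_vadd u w p : pact A (u + w) p = pact A u p + pact A w p.
Proof. by rewrite /pact -big_split; apply: eq_bigr => i _; rewrite mulmxDl scalerDr. Qed.

Lemma pact_vscale c u p : pact A (c *: u) p = c *: pact A u p.
Proof.
rewrite /pact scaler_sumr; apply: eq_bigr => i _.
by rewrite -scalemxAl !scalerA mulrC.
Qed.

Lemma pact_v0 p : pact A 0 p = 0.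
Proof. by rewrite /pact big1 // => i _; rewrite mul0mx scaler0. Qed.

Lemma pact_vsum p I (r : seq I) (P : pred I) (F : I -> 'rV_n) :
  pact A (\sum_(i <- r | P i) F i) p = \sum_(i <- r | P i) pact A (F i) p.
Proof. by elim/big_rec2: _ => [|i x y _ <-]; rewrite ?pact_v0 ?pact_vadd. Qed.

End Pact.

Section Blocks.
Variables (r : nat) (m : 'I_r -> nat).

Definition st (k : nat) : nat := (\sum_(i < r | (i < k)%N) m i)%N.
Definition tot : nat := (\sum_(i < r) m i)%N.

Lemma st0 : st 0 = 0%N.
Proof. by rewrite /st big_pred0. Qed.

Lemma stS (i : 'I_r) : st i.+1 = (st i + m i)%N.
Proof.
rewrite /st (bigD1 i) //= addnC; congr (_ + _)%N.
by apply: eq_bigl => j; rewrite ltnS -val_eqE /= andbC -ltn_neqAle.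
Qed.

Lemma st_ge k : (r <= k)%N -> st k = tot.
Proof. by move=> h; apply: eq_bigl => i; rewrite (leq_trans (ltn_ord i) h). Qed.

Lemma st_mono k k' : (k <= k')%N -> (st k <= st k')%N.
Proof.
move=> h; rewrite /st [X in (_ <= X)%N](bigID (fun i : 'I_r => (i < k)%N)) /=.
apply: leq_trans (leq_addr _ _); rewrite leq_eqVlt; apply/orP; left; apply/eqP.
apply: eq_bigl => i; case hi: (i < k)%N => //=.
by rewrite (leq_trans hi h).
by rewrite andbF.
Qed.

Lemma bsE k : block_start m k = [exists s : 'I_r.+1, k == st s].
Proof. by []. Qed.

Lemma bs_st k : (k <= r)%N -> block_start m (st k).
Proof. by move=> h; apply/existsP; exists (Ordinal (h : (k < r.+1)%N)). Qed.

Lemma st_le_tot k : (st k <= tot)%N.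
Proof.
case: (leqP k r) => h; first by rewrite -(st_ge (leqnn r)); apply: st_mono.
by rewrite st_ge // ltnW.
Qed.

Lemma blockP b : (b < tot)%N -> exists i : 'I_r, (st i <= b < st i + m i)%N.
Proof.
move=> hb.
suff: forall k, (k <= r)%N -> (b < st k)%N -> exists i : 'I_r, (st i <= b < st i + m i)%N.
  by apply; [apply: leqnn | rewrite st_ge].
elim=> [|k IH] hk; first by rewrite st0.
have hkr : (k < r)%N by [].
case: (ltnP b (st k)) => hbk; first by move=> _; apply: IH => //; apply: ltnW.
move=> hb'; exists (Ordinal hkr) => /=; rewrite hbk /=.
by rewrite -(stS (Ordinal hkr)).
Qed.

Lemma block_uniq (i i' : 'I_r) b :
  (st i <= b < st i + m i)%N -> (st i' <= b < st i' + m i')%N -> i = i'.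
Proof.
wlog lt : i i' / (i <= i')%N.
  move=> W h1 h2; case: (leqP i i') => h; first exact: W.
  by apply/esym/W => //; apply: ltnW.
move=> /andP[h1 h2] /andP[h3 h4]; apply/val_inj/eqP; rewrite eqn_leq lt /=.
rewrite leqNgt; apply/negP => lt2.
have : (st i.+1 <= st i')%N by apply: st_mono.
by rewrite stS; move=> /(leq_trans h2); rewrite ltnNge h3.
Qed.

Lemma not_bs_inside (i : 'I_r) k :
  (st i < k < st i + m i)%N -> ~~ block_start m k.
Proof.
move=> /andP[h1 h2]; rewrite bsE; apply/existsP => -[s /eqP ks].
case: (leqP s i) => hs.
  by move: (st_mono hs); rewrite -ks leqNgt h1.
have : (st i.+1 <= st s)%N by apply: st_mono.
by rewrite stS -ks leqNgt h2.
Qed.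

Lemma bs_lastP k : (k < tot)%N -> block_start m k.+1 ->
  exists i : 'I_r, (0 < m i)%N /\ k.+1 = (st i + m i)%N.
Proof.
move=> hk; rewrite bsE => /existsP[s /eqP ks].
have [i [hi1 hi2]] : exists i : 'I_r, (st i <= k < st i + m i)%N /\ True.
  by have [i hi] := blockP hk; exists i.
exists i; move: hi1 => /andP[h1 h2]; split; first by move: h2; case: (m i) => //; rewrite addn0 ltnNge h1.
apply/eqP; rewrite eqn_leq h2 /=.
case: (leqP s i) => hs.
  by move: (st_mono hs); rewrite -ks => h; move: (leq_trans h h1); rewrite ltnn.
by rewrite -stS ks; apply: st_mono.
Qed.

Lemma sum_ltS (R : nmodType) (G : 'I_r -> R) k (hk : (k < r)%N) :
  \sum_(i < r | (i < k.+1)%N) G i = \sum_(i < r | (i < k)%N) G i + G (Ordinal hk).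
Proof.
rewrite (bigD1 (Ordinal hk)) //= addrC; congr (_ + _).
by apply: eq_bigl => j; rewrite ltnS -val_eqE /= andbC -ltn_neqAle.
Qed.

Lemma reindex (R : nmodType) (F : nat -> R) :
  \sum_(b < tot) F b = \sum_(i < r) \sum_(j < m i) F (st i + j)%N.
Proof.
suff : forall k, (k <= r)%N -> \sum_(b < st k) F b =
   \sum_(i < r | (i < k)%N) \sum_(j < m i) F (st i + j)%N.
  by move=> /(_ r (leqnn r)); rewrite st_ge // => ->; apply: eq_bigl => i; rewrite ltn_ord.
elim=> [|k IH] hk; first by rewrite st0 big_ord0 big_pred0.
have hkr : (k < r)%N by [].
rewrite (stS (Ordinal hkr)) (sum_ltS _ hkr) -IH; last exact: ltnW.
rewrite big_split_ord; congr (_ + _).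
Qed.

End Blocks.

Lemma sel_mulmx (R : pzRingType) m1 n1 p1 (f : 'I_m1 -> 'I_n1) (N : 'M[R]_(n1, p1)) i j :
  ((\matrix_(i, k) (k == f i)%:R) *m N) i j = N (f i) j.
Proof.
rewrite mxE (bigD1 (f i)) //= mxE eqxx mul1r big1 ?addr0 // => k hk.
by rewrite mxE (negbTE hk) mul0r.
Qed.

Lemma mulmx_sel (R : pzRingType) m1 n1 p1 (g : 'I_p1 -> 'I_n1) (N : 'M[R]_(m1, n1)) i j :
  (N *m (\matrix_(k, a) (k == g a)%:R)) i j = N i (g j).
Proof.
rewrite mxE (bigD1 (g j)) //= mxE eqxx mulr1 big1 ?addr0 // => k hk.
by rewrite mxE (negbTE hk) mulr0.
Qed.

Lemma char_poly_mxE (R : nzRingType) n (A : 'M[R]_n) i j :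
  char_poly_mx A i j = 'X *+ (i == j) - (A i j)%:P.
Proof. by rewrite !mxE. Qed.

Section Det.
Variables (S : idomainType) (r : nat) (m : 'I_r -> nat) (p q : nat).
Hypothesis Hpr : (p <= r)%N.
Hypothesis Hp : forall i : 'I_r, (i < p)%N = (0 < m i)%N.
Hypothesis Htot : tot m = (p + q)%N.
Local Notation n := (p + q)%N.
Local Notation bs := (block_start m).
Local Notation st := (st m).

Definition wd (i : 'I_p) : 'I_r := widen_ord Hpr i.
Definition inb (i : 'I_r) (b : nat) : bool := (st i <= b < st i + m i)%N.

Lemma mw_gt0 (i : 'I_p) : (0 < m (wd i))%N.
Proof. by rewrite -Hp /= ltn_ord. Qed.

Lemma last_lt (i : 'I_p) : ((st i + m (wd i)).-1 < n)%N.
Proof.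
rewrite -Htot; have := st_le_tot m i.+1; rewrite (stS m (wd i)) /=.
by have := mw_gt0 i; case: (m (wd i)) => // k _; rewrite addnS.
Qed.

Definition lastp (i : 'I_p) : 'I_n := Ordinal (last_lt i).

Lemma inb_last (i : 'I_p) (i' : 'I_r) : inb i' (lastp i) = (wd i == i').
Proof.
have h : inb (wd i) (lastp i).
  rewrite /inb /=; have := mw_gt0 i; case: (m (wd i)) => // k _.
  by rewrite addnS /= leq_addr leqnn.
apply/idP/eqP => [h'|<-] //; exact: block_uniq h h'.
Qed.

Lemma bs_lastS (i : 'I_p) : bs (lastp i).+1.
Proof.
have -> : (lastp i).+1 = st (wd i).+1.
  rewrite /= (stS m (wd i)); have := mw_gt0 i; case: (m (wd i)) => // k _.
  by rewrite addnS.
by apply: bs_st.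
Qed.

Variable psi : 'I_q -> 'I_n.
Hypothesis psi_inj : injective psi.
Hypothesis psi_nl : forall a, ~~ bs (psi a).+1.

Lemma nxt_lt a : ((psi a).+1 < n)%N.
Proof.
rewrite ltn_neqAle ltn_ord andbT; apply/eqP => h.
have := psi_nl a; rewrite h -Htot -(st_ge m (leqnn r)) bs_st //.
Qed.

Definition nxt a : 'I_n := Ordinal (nxt_lt a).

Lemma bs_st' (i : 'I_r) : bs (st i).
Proof. by apply: bs_st; apply: ltnW. Qed.

Lemma inb_nxt a (i : 'I_r) : inb i (nxt a) = inb i (psi a).
Proof.
rewrite /inb /=; apply/idP/idP => /andP[h1 h2].
  rewrite (ltnW h2) andbT; move: h1; rewrite leq_eqVlt; case/orP => [/eqP h1|] //.
  by have := psi_nl a; rewrite -h1 bs_st'.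
rewrite (leq_trans h1) //= ltn_neqAle h2 andbT; apply/eqP => h.
by have := psi_nl a; rewrite h -stS bs_st.
Qed.

Definition U : 'M[{poly S}]_(n, p) :=
  \matrix_(k, i) ((inb (wd i) k)%:R * 'X^(k - st (wd i))).
Definition Xp (C : 'M[S]_n) : 'M[{poly S}]_p :=
  \matrix_(i, i') ((i == i')%:R * 'X^(m (wd i)) - \sum_(b < n) (C (lastp i) b)%:P * U b i').
Definition P1 : 'M[{poly S}]_(p, n) := \matrix_(i, k) (k == lastp i)%:R.
Definition P2 : 'M[{poly S}]_(q, n) := \matrix_(a, k) (k == psi a)%:R.
Definition E : 'M[{poly S}]_(n, q) := \matrix_(k, a) (k == nxt a)%:R.
Definition Pm : 'M[{poly S}]_n := col_mx P1 P2.
Definition Wm : 'M[{poly S}]_n := row_mx U E.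
Definition D : 'M[{poly S}]_q := \matrix_(a, b) ('X *+ (psi a == nxt b) - ((a == b)%:R)%:P).
Definition Jm : 'M[S]_n := @nilJordan S r n m.
Definition Mc (C : 'M[S]_n) := char_poly_mx (Jm + C).

Lemma M_last C i k : Mc C (lastp i) k = 'X *+ (lastp i == k) - (C (lastp i) k)%:P.
Proof.
rewrite char_poly_mxE !mxE; congr (_ - _%:P).
case: eqP => [h|]; last by rewrite andFb add0r.
by rewrite h bs_lastS andbF add0r.
Qed.

Lemma M_psi (C : 'M[S]_n) (HC : forall k : 'I_n, ~~ bs k.+1 -> forall j, C k j = 0) a k :
  Mc C (psi a) k = 'X *+ (psi a == k) - ((k == (psi a).+1 :> nat))%:R%:P.
Proof.
rewrite char_poly_mxE !mxE HC // addr0; congr (_ - _%:P).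
by case: eqP => // ->; rewrite psi_nl.
Qed.

Lemma sum_delta (l : 'I_n) (f : 'I_n -> {poly S}) (c : {poly S}) :
  \sum_(k < n) (c *+ (l == k)) * f k = c * f l.
Proof.
rewrite (bigD1 l) //= eqxx mulr1n big1 ?addr0 // => k hk.
by rewrite eq_sym (negbTE hk) mulr0n mul0r.
Qed.

Lemma wd_eq (i j : 'I_p) : (wd i == wd j) = (i == j).
Proof. by rewrite -!val_eqE. Qed.

Lemma TL C i j : (P1 *m Mc C *m U) i j = Xp C i j.
Proof.
rewrite -mulmxA sel_mulmx mxE.
under eq_bigr do rewrite M_last mulrBl.
rewrite sumrB sum_delta [RHS]mxE; congr (_ - _).
rewrite mxE inb_last wd_eq; case: eqP => [<-|_]; last by rewrite !mul0r mulr0.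
rewrite !mul1r /=.
have := mw_gt0 i; case: (m (wd i)) => // k _.
by rewrite addnS /= addKn exprS.
Qed.

Lemma sum_delta2 (l : 'I_n) (f : 'I_n -> {poly S}) :
  \sum_(k < n) ((k == l :> nat)%:R)%:P * f k = f l.
Proof.
rewrite (bigD1 l) //= eqxx mul1r big1 ?addr0 // => k hk.
by rewrite val_eqE (negbTE hk) mul0r.
Qed.

Lemma BL (C : 'M[S]_n) (HC : forall k : 'I_n, ~~ bs k.+1 -> forall j, C k j = 0) a j :
  (P2 *m Mc C *m U) a j = 0.
Proof.
rewrite -mulmxA sel_mulmx mxE.
under eq_bigr do rewrite M_psi // mulrBl.
rewrite sumrB (sum_delta (psi a)).
have -> : \sum_(k < n) ((k == (psi a).+1 :> nat)%:R)%:P * U k j = U (nxt a) j.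
  exact: (sum_delta2 (nxt a)).
rewrite !mxE inb_nxt; case h: (inb (wd j) (psi a)); last by rewrite !mul0r mulr0 subrr.
move: h; rewrite /inb => /andP[h1 _].
by rewrite !mul1r /= subSn // exprS subrr.
Qed.

Lemma BR (C : 'M[S]_n) (HC : forall k : 'I_n, ~~ bs k.+1 -> forall j, C k j = 0) a b :
  (P2 *m Mc C *m E) a b = D a b.
Proof.
rewrite -mulmxA sel_mulmx mulmx_sel M_psi // mxE; congr (_ - _%:P).
rewrite /= eqSS val_eqE.
have -> : (psi b == psi a) = (a == b) by apply/idP/idP => [/eqP/psi_inj ->|/eqP ->].
by [].
Qed.

Lemma blk (C : 'M[S]_n) (HC : forall k : 'I_n, ~~ bs k.+1 -> forall j, C k j = 0) :
  Pm *m Mc C *m Wm = block_mx (Xp C) (P1 *m Mc C *m E) 0 D.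
Proof.
rewrite /Pm /Wm mul_col_mx mul_col_row; congr block_mx; apply/matrixP => i j.
- exact: TL.
- by rewrite BL // mxE.
- exact: BR.
Qed.

Lemma det_blk (C : 'M[S]_n) (HC : forall k : 'I_n, ~~ bs k.+1 -> forall j, C k j = 0) :
  \det Pm * char_poly (Jm + C) * \det Wm = \det (Xp C) * \det D.
Proof. by rewrite /char_poly -!det_mulmx -/(Mc C) blk // det_ublock. Qed.

Lemma cpJ : char_poly Jm = 'X^n.
Proof.
rewrite /char_poly -det_tr det_trig.
  rewrite (eq_bigr (fun=> 'X)); first by rewrite prodr_const card_ord.
  by move=> i _; rewrite !mxE eqxx /= ltn_eqF // andFb subr0.
apply/is_trig_mxP => i j lt; rewrite !mxE.
rewrite -val_eqE (gtn_eqF lt) /=; have -> : (i == j.+1 :> nat) = false.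
  by apply/negbTE; rewrite neq_ltn (ltn_trans lt) ?orbT.
by rewrite andFb subrr.
Qed.

Lemma sum_mw : (\sum_(i < p) m (wd i))%N = n.
Proof.
rewrite -Htot /tot (bigID (fun i : 'I_r => (i < p)%N)) /= (big_ord_narrow Hpr).
rewrite [X in _ = (_ + X)%N]big1 ?addn0; first by [].
by move=> i; rewrite Hp lt0n negbK => /eqP.
Qed.

Lemma detX0 : \det (Xp 0) = 'X^n.
Proof.
rewrite det_trig.
  transitivity ('X^(\sum_(i < p) m (wd i)) : {poly S}); last by rewrite sum_mw.
  rewrite -prodrXr; apply: eq_bigr => i _.
  by rewrite mxE eqxx mul1r big1 ?subr0 // => k _; rewrite mxE mul0r.
apply/is_trig_mxP => i j lt; rewrite mxE big1 ?subr0.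
  by rewrite -val_eqE (ltn_eqF lt) mul0r.
by move=> k _; rewrite mxE mul0r.
Qed.

Lemma detD_neq0 : \det D != 0.
Proof.
apply/negP => /eqP h.
have := det_map_mx (horner_eval (0 : S)) D; rewrite h rmorph0.
have -> : map_mx (horner_eval 0) D = - 1%:M.
  apply/matrixP => a b; rewrite !mxE horner_evalE hornerD hornerN hornerMn hornerX hornerC.
  by rewrite mul0rn add0r.
rewrite -scaleN1r detZ det1 mulr1 => /eqP; rewrite expf_eq0 oppr_eq0 oner_eq0 andbF.
by [].
Qed.

Lemma det_main (C : 'M[S]_n) (HC : forall k : 'I_n, ~~ bs k.+1 -> forall j, C k j = 0) :
  char_poly (Jm + C) = \det (Xp C).
Proof.
have HC0 : forall k : 'I_n, ~~ bs k.+1 -> forall j, (0 : 'M[S]_n) k j = 0.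
  by move=> k _ j; rewrite mxE.
have h0 := det_blk HC0; rewrite addr0 cpJ detX0 in h0.
have hX : 'X^n != 0 :> {poly S} by rewrite monic_neq0 ?monicXn.
have e : \det Pm * \det Wm = \det D.
  apply: (mulfI hX); rewrite -h0 mulrCA mulrA.
  by [].
have nz : \det Pm * \det Wm != 0 by rewrite e detD_neq0.
apply: (mulfI nz); rewrite [RHS]mulrC e -det_blk // -e.
by rewrite mulrAC.
Qed.

End Det.

Lemma det_restrict (R : comNzRingType) r p (Hpr : (p <= r)%N) (A : 'M[R]_r) :
  (forall i j : 'I_r, (p <= i)%N || (p <= j)%N -> A i j = (i == j)%:R) ->
  \det A = \det (\matrix_(i < p, j < p) A (widen_ord Hpr i) (widen_ord Hpr j)).
Proof.
have [z ez] : exists z, r = (p + z)%N by exists (r - p)%N; rewrite subnKC.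
subst r => hA.
rewrite -{1}[A]submxK.
have -> : dlsubmx A = 0.
  apply/matrixP => i j; rewrite !mxE hA /=; last by rewrite leq_addr.
  by rewrite -val_eqE /= gtn_eqF // (leq_trans (ltn_ord j)) ?leq_addr.
rewrite det_ublock.
have -> : drsubmx A = 1%:M.
  apply/matrixP => i j; rewrite !mxE hA /=; last by rewrite leq_addr.
  by rewrite -val_eqE /= eqn_add2l.
rewrite det1 mulr1; congr (\det _); apply/matrixP => i j; rewrite !mxE.
by congr (A _ _); apply: val_inj.
Qed.

Section Psi.
Variables (r : nat) (m : 'I_r -> nat) (p q : nat).
Hypothesis Hpr : (p <= r)%N.
Hypothesis Hp : forall i : 'I_r, (i < p)%N = (0 < m i)%N.
Hypothesis Htot : tot m = (p + q)%N.

Lemma psi_exists : exists psi : 'I_q -> 'I_(p + q),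
  injective psi /\ forall a, ~~ block_start m (psi a).+1.
Proof.
pose NL := [set k : 'I_(p + q) | ~~ block_start m k.+1].
have hc : (#|~: NL| <= p)%N.
  have : ~: NL \subset [set lastp Hpr Hp Htot i | i : 'I_p].
    apply/subsetP => k; rewrite !inE negbK => hk.
    have hk' : (k < tot m)%N by rewrite Htot ltn_ord.
    have [i [hi e]] := bs_lastP hk' hk.
    have ip : (i < p)%N by rewrite Hp.
    apply/imsetP; exists (Ordinal ip) => //; apply: val_inj => /=.
    have -> : wd Hpr (Ordinal ip) = i by apply: val_inj.
    by rewrite -e.
  move/subset_leq_card; move/leq_trans; apply.
  by rewrite (leq_trans (leq_imset_card _ _)) // card_ord.
have hq : (q <= #|NL|)%N.
  have := cardsC NL; rewrite card_ord => e.
  have h2 : (#|NL| + #|~: NL| <= #|NL| + p)%N by rewrite leq_add2l.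
  by move: h2; rewrite e [(#|NL| + p)%N]addnC leq_add2l.
exists (fun a => nth (widen_ord (leq_addl p q) a) (enum NL) a); split.
  move=> a b.
  have ha : (a < size (enum NL))%N by rewrite -cardE (leq_trans (ltn_ord a) hq).
  have hb : (b < size (enum NL))%N by rewrite -cardE (leq_trans (ltn_ord b) hq).
  rewrite (set_nth_default (widen_ord (leq_addl p q) a) _ hb) => /eqP.
  by rewrite nth_uniq ?enum_uniq // => /eqP/val_inj.
move=> a; have : nth (widen_ord (leq_addl p q) a) (enum NL) a \in NL.
  by rewrite -mem_enum mem_nth // -cardE (leq_trans (ltn_ord a) hq).
by rewrite inE.
Qed.
End Psi.

Section Ker.
Variables (S : idomainType) (r : nat) (m : 'I_r -> nat) (n : nat) (A B : 'M[S]_n)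
  (w : 'I_r -> 'rV[S]_n).
Hypothesis Hn : tot m = n.
Hypothesis HB : B \in unitmx.
Hypothesis Hrow : forall (i : 'I_r) (k : 'I_n), inb m i k -> row k B = w i *m A ^+ (k - st m i).
Hypothesis Hw0 : forall i, m i = 0%N -> w i = 0.

Definition atv (x : 'rV[S]_n) (k : nat) : S := if insub k is Some kk then x 0 kk else 0.
Definition rowN (k : nat) : 'rV[S]_n := if insub k is Some kk then row kk B else 0.

Lemma atvE x (k : 'I_n) : atv x k = x 0 k.
Proof. by rewrite /atv valK. Qed.
Lemma rowNE (k : 'I_n) : rowN k = row k B.
Proof. by rewrite /rowN valK. Qed.

Lemma reindex_n (R : nmodType) (F : nat -> R) :
  \sum_(b < n) F b = \sum_(i < r) \sum_(j < m i) F (st m i + j)%N.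
Proof. by rewrite -(big_mkord xpredT) -Hn big_mkord reindex. Qed.

Lemma inb_lt i b : inb m i b -> (b < n)%N.
Proof.
move=> /andP[_ h]; rewrite -Hn; apply: leq_trans h _.
by rewrite -stS; apply: st_le_tot.
Qed.

Lemma Hrow' (i : 'I_r) j : (j < m i)%N -> w i *m A ^+ j = rowN (st m i + j).
Proof.
move=> hj.
have hi : inb m i (st m i + j) by rewrite /inb leq_addr ltn_add2l.
have hlt := inb_lt hi.
by rewrite /rowN insubT /= (Hrow (i:=i)) //= addKn.
Qed.

Lemma blk_of (b : 'I_n) : exists k0, inb m k0 b /\ forall k, inb m k b = (k == k0).
Proof.
have hb : (b < tot m)%N by rewrite Hn ltn_ord.
have [k0 h0] := blockP hb; exists k0; split => // k.
apply/idP/eqP => [h|->] //; exact: block_uniq h h0.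
Qed.

Definition cv (i : 'I_r) : 'rV[S]_n := w i *m A ^+ (m i) *m invmx B.
Definition Ur (b : nat) (k : 'I_r) : {poly S} := (inb m k b)%:R * 'X^(b - st m k).
Definition Xk : 'M[{poly S}]_r :=
  \matrix_(k, i) ((k == i)%:R * 'X^(m i) - \sum_(b < n) (cv i 0 b)%:P * Ur b k).
Definition phi (q : 'cV[{poly S}]_r) : 'rV[S]_n := \sum_(i < r) pact A (w i) (q i ord0).

Lemma pact_natmul v (bb : bool) p : pact A v (bb%:R * p) = bb%:R *: pact A v p.
Proof. by case: bb; rewrite ?mul1r ?mul0r ?scale1r ?scale0r ?pact0. Qed.

Lemma pactCM v c p : pact A v (c%:P * p) = c *: pact A v p.
Proof. by rewrite pactM pactC pact_vscale. Qed.

Lemma X_rel i : \sum_(k < r) pact A (w k) (Xk k i) = 0.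
Proof.
under eq_bigr do rewrite mxE pactD pactN pact_natmul pactXn pact_sum.
rewrite sumrB (bigD1 i) //= eqxx scale1r big1 ?addr0; last first.
  by move=> k /negbTE ->; rewrite scale0r.
rewrite exchange_big /=.
have -> : \sum_(b < n) \sum_(k < r) pact A (w k) ((cv i 0 b)%:P * Ur b k) =
          \sum_(b < n) cv i 0 b *: row b B.
  apply: eq_bigr => b _; have [k0 [h0 hk]] := blk_of b.
  rewrite (bigD1 k0) //= big1 ?addr0; last first.
    by move=> k hk'; rewrite pactCM /Ur hk (negbTE hk') mul0r pact0 scaler0.
  by rewrite pactCM /Ur h0 mul1r pactXn -Hrow.
by rewrite -mulmx_sum_row /cv mulmxKV // subrr.
Qed.

Lemma phi_X q' : phi (Xk *m q') = 0.
Proof.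
rewrite /phi.
under eq_bigr do rewrite mxE pact_sum.
rewrite exchange_big /=; apply: big1 => i _.
under eq_bigr do rewrite pactM.
by rewrite -pact_vsum X_rel pact_v0.
Qed.

Definition red (u : 'rV[S]_n) : 'cV[{poly S}]_r :=
  \col_i \sum_(j < m i) (atv (u *m invmx B) (st m i + j))%:P * 'X^j.

Lemma atvD x y k : atv (x + y) k = atv x k + atv y k.
Proof. by rewrite /atv; case: insub => [kk|]; rewrite ?mxE ?addr0. Qed.
Lemma atvZ c x k : atv (c *: x) k = c * atv x k.
Proof. by rewrite /atv; case: insub => [kk|]; rewrite ?mxE ?mulr0. Qed.

Lemma redD u v : red (u + v) = red u + red v.
Proof.
apply/matrixP => i j; rewrite !mxE -big_split /=; apply: eq_bigr => k _.
by rewrite mulmxDl atvD polyCD mulrDl.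
Qed.

Lemma redZ c u : red (c *: u) = c%:P *: red u.
Proof.
apply/matrixP => i j; rewrite !mxE mulr_sumr; apply: eq_bigr => k _.
by rewrite -scalemxAl atvZ polyCM mulrA.
Qed.

Lemma red0 : red 0 = 0.
Proof. by rewrite -(scale0r (0 : 'rV[S]_n)) redZ scale0r. Qed.

Lemma red_sum I (s : seq I) (P : pred I) (F : I -> 'rV[S]_n) :
  red (\sum_(i <- s | P i) F i) = \sum_(i <- s | P i) red (F i).
Proof. by elim/big_rec2: _ => [|i x y _ <-]; rewrite ?red0 ?redD. Qed.

Lemma phiD q1 q2 : phi (q1 + q2) = phi q1 + phi q2.
Proof.
by rewrite /phi -big_split /=; apply: eq_bigr => i _; rewrite mxE pactD.
Qed.

Lemma phiZ c q : phi (c%:P *: q) = c *: phi q.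
Proof.
rewrite /phi scaler_sumr; apply: eq_bigr => i _; by rewrite mxE pactCM.
Qed.

Lemma phi0 : phi 0 = 0.
Proof. by rewrite /phi big1 // => i _; rewrite mxE pact0. Qed.

Lemma phi_sum I (s : seq I) (P : pred I) (F : I -> 'cV[{poly S}]_r) :
  phi (\sum_(i <- s | P i) F i) = \sum_(i <- s | P i) phi (F i).
Proof. by elim/big_rec2: _ => [|i x y _ <-]; rewrite ?phi0 ?phiD. Qed.

Lemma phi_red u : phi (red u) = u.
Proof.
rewrite /phi.
under eq_bigr do rewrite mxE pact_sum.
have -> : \sum_(i < r) \sum_(j < m i) pact A (w i) ((atv (u *m invmx B) (st m i + j))%:P * 'X^j)
   = \sum_(i < r) \sum_(j < m i) (fun b => atv (u *m invmx B) b *: rowN b) (st m i + j)%N.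
  apply: eq_bigr => i _; apply: eq_bigr => j _.
  by rewrite pactCM pactXn Hrow'.
rewrite -(reindex_n (fun b => atv (u *m invmx B) b *: rowN b)).
under eq_bigr do rewrite atvE rowNE.
by rewrite -mulmx_sum_row mulmxKV.
Qed.

Definition good (q : 'cV[{poly S}]_r) := exists q', q = Xk *m q'.

Lemma good0 : good 0.
Proof. by exists 0; rewrite mulmx0. Qed.
Lemma goodD q1 q2 : good q1 -> good q2 -> good (q1 + q2).
Proof. by move=> [y1 ->] [y2 ->]; exists (y1 + y2); rewrite mulmxDr. Qed.
Lemma goodZ c q : good q -> good (c *: q).
Proof. by move=> [y ->]; exists (c *: y); rewrite scalemxAr. Qed.
Lemma goodX y : good (Xk *m y).
Proof. by exists y. Qed.
Lemma good_sum I (s : seq I) (P : pred I) (F : I -> 'cV[{poly S}]_r) :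
  (forall i, P i -> good (F i)) -> good (\sum_(i <- s | P i) F i).
Proof.
move=> h; elim/big_rec: _ => [|i x Pi gx]; first exact: good0.
by apply: goodD => //; apply: h.
Qed.

Definition mon (i : 'I_r) (a : nat) : 'cV[{poly S}]_r := 'X^a *: delta_mx i 0.

Lemma mon_entry i a k : mon i a k 0 = (k == i)%:R * 'X^a.
Proof. by rewrite !mxE eqxx andbT mulrC. Qed.

Lemma phi_mon i a : phi (mon i a) = w i *m A ^+ a.
Proof.
rewrite /phi (bigD1 i) //= big1 ?addr0.
  by rewrite mon_entry eqxx mul1r pactXn.
by move=> k hk; rewrite mon_entry (negbTE hk) mul0r pact0.
Qed.

Lemma good_lin (I J : finType) y (c : I -> J -> S) (z : I -> J -> 'cV[{poly S}]_r) q :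
  q = Xk *m y + \sum_(b : I) \sum_(k : J) (c b k)%:P *: z b k ->
  q - red (phi q) = Xk *m y + \sum_(b : I) \sum_(k : J) (c b k)%:P *: (z b k - red (phi (z b k))).
Proof.
move=> ->; rewrite phiD phi_X add0r !phi_sum red_sum.
under [X in _ - X]eq_bigr do rewrite phi_sum red_sum.
under [X in _ - X]eq_bigr do under eq_bigr do rewrite phiZ redZ.
rewrite -addrA; congr (_ + _); rewrite -sumrB; apply: eq_bigr => b _.
by rewrite -sumrB; apply: eq_bigr => k _; rewrite scalerBr.
Qed.

Lemma row1_inv (kk : 'I_n) : row kk B *m invmx B = delta_mx 0 kk.
Proof. by rewrite -row_mul mulmxV // row1. Qed.

Lemma atv_delta (kk : 'I_n) b : atv (delta_mx 0 kk) b = (b == kk :> nat)%:R.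
Proof.
rewrite /atv; case: insubP => [o _ <-|hb] /=; first by rewrite mxE eqxx /= val_eqE.
by rewrite (_ : (b == kk :> nat) = false) //; apply/negbTE; apply: contra hb => /eqP ->.
Qed.

Lemma key_small i a : (a < m i)%N -> red (phi (mon i a)) = mon i a.
Proof.
move=> ha; rewrite phi_mon Hrow' //.
have hlt : (st m i + a < n)%N.
  by apply: (@inb_lt i); rewrite /inb leq_addr ltn_add2l.
rewrite /rowN insubT /= /red row1_inv.
apply/matrixP => i' z; rewrite (ord1 z) mon_entry mxE.
under eq_bigr do rewrite atv_delta /=.
case: (eqVneq i' i) => [->|ne].
  rewrite mul1r (bigD1 (Ordinal ha)) //= eqxx mul1r big1 ?addr0 // => j hj.
  by rewrite eqn_add2l (_ : (j == a :> nat) = false) ?mul0r //; apply/negbTE.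
rewrite mul0r big1 // => j _.
have [e|ne'] := eqVneq (st m i' + j)%N (st m i + a)%N; last by rewrite /= mulr0n polyC0 mul0r.
exfalso; move/eqP: ne; apply; apply: (@block_uniq _ m _ _ (st m i + a)).
  by rewrite /inb -e leq_addr ltn_add2l ltn_ord.
by rewrite /inb leq_addr ltn_add2l.
Qed.

Lemma cv0 i : m i = 0%N -> cv i = 0.
Proof. by move=> h; rewrite /cv Hw0 // !mul0mx. Qed.

Lemma key_zero i a : m i = 0%N -> good (mon i a - red (phi (mon i a))).
Proof.
move=> h; rewrite phi_mon Hw0 // mul0mx red0 subr0.
exists (mon i a); apply/matrixP => k z; rewrite (ord1 z) {z} [RHS]mxE.
rewrite (bigD1 i) //= big1 ?addr0; last first.
  by move=> k' hk; rewrite mon_entry (negbTE hk) mul0r mulr0.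
rewrite [mon i a i 0]mon_entry eqxx mul1r [Xk k i]mxE big1; last first.
  by move=> b _; rewrite cv0 // mxE polyC0 mul0r.
by rewrite subr0 h expr0 mulr1 mon_entry.
Qed.

Lemma inner c b k' e :
  \sum_(k < r) ((c * (inb m k b)%:R)%:P *: mon k (b - st m k + e)%N) k' 0 =
  (c * (inb m k' b)%:R)%:P * 'X^(b - st m k' + e).
Proof.
under eq_bigr do rewrite mxE mon_entry.
rewrite (bigD1 k') //= eqxx mul1r big1 ?addr0 //.
by move=> k hk; rewrite eq_sym (negbTE hk) mul0r mulr0.
Qed.

Lemma mon_decomp i a : (m i <= a)%N -> mon i a = Xk *m mon i (a - m i) +
  \sum_(b < n) \sum_(k < r) (cv i 0 b * (inb m k b)%:R)%:P *: mon k (b - st m k + (a - m i))%N.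
Proof.
move=> ha; apply/matrixP => k' z; rewrite (ord1 z) {z}.
rewrite [in RHS]mxE [X in _ = _ + X]summxE.
under [X in _ = _ + X]eq_bigr do rewrite summxE inner.
rewrite [(Xk *m _) _ _]mxE (bigD1 i) //= big1; last first.
  by move=> k hk; rewrite mon_entry (negbTE hk) mul0r mulr0.
rewrite addr0 [mon i _ i 0]mon_entry eqxx mul1r [Xk k' i]mxE mulrBl mulr_suml.
have -> : \sum_(b < n) (cv i 0 b)%:P * Ur b k' * 'X^(a - m i) =
          \sum_(b < n) (cv i 0 b * (inb m k' b)%:R)%:P * 'X^(b - st m k' + (a - m i)).
  apply: eq_bigr => b _.
  by rewrite /Ur polyCM polyC_natr exprD !mulrA.
by rewrite subrK mon_entry -mulrA -exprD subnKC.
Qed.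

Lemma key i a : good (mon i a - red (phi (mon i a))).
Proof.
suff: forall N i a, (a + (n - m i) < N)%N -> good (mon i a - red (phi (mon i a))).
  by move=> h; apply: (h (a + (n - m i)).+1).
elim=> [//|N IH] {}i {}a hN.
case: (eqVneq (m i) 0%N) => [h0|hnz]; first exact: key_zero.
case: (ltnP a (m i)) => ha; first by rewrite key_small // subrr; exact: good0.
rewrite (@good_lin _ _ (mon i (a - m i)) (fun b k => cv i 0 b * (inb m k b)%:R)
  (fun b k => mon k (b - st m k + (a - m i))) _ (mon_decomp ha)).
apply: goodD; first exact: goodX.
apply: good_sum => b _; apply: good_sum => k _.
case hb: (inb m k b); last by rewrite mulr0 polyC0 scale0r; exact: good0.
apply: goodZ; apply: IH.
have hk : (st m k + m k <= n)%N by rewrite -Hn -stS st_le_tot.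
move: hb; rewrite /inb => /andP[h1 h2].
move: h1 h2 hk ha hN => /leP h1 /ltP h2 /leP hk /leP ha /ltP hN; apply/ltP.
rewrite -!minusE -!plusE in h1 h2 hk ha hN *. lia.
Qed.

Lemma poly_expand (p : {poly S}) N : (size p <= N)%N ->
  p = \sum_(a < N) (p`_a)%:P * 'X^a.
Proof.
move=> hs; apply/polyP => j; rewrite coef_sum.
under eq_bigr do rewrite coefCM coefXn.
case: (ltnP j N) => hj.
  rewrite (bigD1 (Ordinal hj)) //= eqxx mulr1 big1 ?addr0 // => a ha.
  by rewrite eq_sym (_ : (a == j :> nat) = false) ?mulr0 //; apply/negbTE; rewrite -val_eqE in ha.
rewrite big1 ?nth_default //; first exact: leq_trans hs hj.
move=> a _; rewrite (_ : (j == a :> nat) = false) ?mulr0 //.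
by apply/negbTE; rewrite neq_ltn (leq_trans (ltn_ord a) hj) orbT.
Qed.

Lemma claim q : good (q - red (phi q)).
Proof.
pose N := (\max_(i < r) size (q i ord0))%N.
have e : q = Xk *m 0 + \sum_(i : 'I_r) \sum_(a : 'I_N) ((q i 0)`_a)%:P *: mon i a.
  rewrite mulmx0 add0r; apply/matrixP => k z; rewrite (ord1 z) {z} summxE.
  under eq_bigr do rewrite summxE.
  rewrite (bigD1 k) //= [X in _ = _ + X]big1 ?addr0; last first.
    move=> i hi; apply: big1 => a _; rewrite mxE mon_entry.
    by rewrite eq_sym (negbTE hi) mul0r mulr0.
  under eq_bigr do rewrite mxE mon_entry eqxx mul1r.
  apply: poly_expand; exact: (@leq_bigmax _ (fun i => size (q i ord0)) k).
rewrite (good_lin e); apply: goodD; first exact: goodX.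
by apply: good_sum => i _; apply: good_sum => a _; apply: goodZ; apply: key.
Qed.

Lemma ker_iff q : phi q = 0 <-> good q.
Proof.
split => [h|[q' ->]]; last exact: phi_X.
by have := claim q; rewrite h red0 subr0.
Qed.

Lemma surj u : exists q, phi q = u.
Proof. by exists (red u); apply: phi_red. Qed.

End Ker.

Lemma char_poly_conj (R : comUnitRingType) n (A B : 'M[R]_n) :
  B \in unitmx -> char_poly (B *m A *m invmx B) = char_poly A.
Proof.
move=> hB.
have e : char_poly_mx (B *m A *m invmx B) =
  map_mx polyC B *m char_poly_mx A *m map_mx polyC (invmx B).
  rewrite /char_poly_mx mulmxBr mulmxBl !map_mxM; congr (_ - _).
  by rewrite scalar_mxC -mulmxA -map_mxM mulmxV // map_mx1 mulmx1.
rewrite /char_poly e !det_mulmx mulrAC -det_mulmx -map_mxM mulmxV //.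
by rewrite map_mx1 det1 mul1r.
Qed.

Unset Implicit Arguments.
Theorem mainTheorem11
  (S : idomainType) (l : nat) (F : finFieldType) (pi : {rmorphism S -> F})
  (HS : @unram_int_ring S l F pi)
  (d1 : nat) (f1 : {poly S})
  (Hf1m : f1 \is monic) (Hf1s : size f1 = d1.+1)
  (Hf1l : map_poly pi f1 = 'X^d1)
  (n : nat) (A : 'M[S]_n)
  (HA : forall v : 'rV[S]_n, pact A v f1 = 0)
  (r : nat) (v : 'I_r -> 'rV[S]_n)
  (Hgen : forall w : 'rV[S]_n, exists p : 'I_r -> {poly S},
            w = \sum_(i < r) pact A (v i) (p i))
  (m : 'I_r -> nat)
  (Hm : @Hp F n r (map_mx pi A) m) :
  exists (X Y : 'M[{poly S}]_r),
    [/\ Y *m X = f1%:M,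
        \det X = char_poly A,
        (exists w : 'I_r -> 'rV[S]_n,
           let phi := fun q : 'cV[{poly S}]_r =>
                        \sum_(i < r) pact A (w i) (q i ord0) in
           (forall u : 'rV[S]_n, exists q, phi q = u) /\
           (forall q : 'cV[{poly S}]_r,
              phi q = 0 <-> exists q' : 'cV[{poly S}]_r, q = X *m q')) &
        map_mx (map_poly pi) X =
          \matrix_(i < r, j < r) ((i == j)%:R * 'X^(m i))].
Proof.
case: HS => lprime lnz [Hdvr Hsurj Hker Hcomp].
case: Hm => Hdec Hsum [P [Punit HP]].
have [p [Hpr Hp]] : exists p, (p <= r)%N /\ forall i : 'I_r, (i < p)%N = (0 < m i)%N.
  pose Pz k := (r <= k)%N || [exists i : 'I_r, (i == k :> nat) && (m i == 0%N)].
  have ex : exists k, Pz k by exists r; rewrite /Pz leqnn.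
  case: (ex_minnP ex) => p0 Hp0 Hmin.
  exists p0; split; first by apply: Hmin; rewrite /Pz leqnn.
  move=> i; apply/idP/idP => h.
    rewrite lt0n; apply/negP => /eqP hm.
    have : (p0 <= i)%N by apply: Hmin; rewrite /Pz; apply/orP; right; apply/existsP; exists i; rewrite eqxx hm.
    by rewrite leqNgt h.
  rewrite ltnNge; apply/negP => hle.
  case/orP: Hp0 => [hr|/existsP[i0 /andP[/eqP e0 /eqP m0]]].
    by move: (leq_trans hr hle); rewrite leqNgt ltn_ord.
  have := Hdec i0 i; rewrite e0 hle => /(_ isT); rewrite m0 leqn0 => /eqP hm.
  by move: h; rewrite hm.
have Htot : tot m = n := Hsum.
have hpn : (p <= n)%N.
  rewrite -Htot /tot (bigID (fun i : 'I_r => (i < p)%N)) /=; apply: leq_trans (leq_addr _ _).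
  have : (\sum_(i < r | (i < p)%N) 1 <= \sum_(i < r | (i < p)%N) m i)%N.
    by apply: leq_sum => i; rewrite Hp.
  apply: leq_trans; rewrite (big_ord_narrow Hpr) sum1_card card_ord //.
have [q eq] : exists q, n = (p + q)%N by exists (n - p)%N; rewrite subnKC.
move: Hsum Htot; subst n => Hsum Htot.
set n := (p + q)%N.
set N := map_mx pi A.
have PN : P *m N = nilJordan F n m *m P by rewrite -HP mulmxKV.
pose Prow (k : nat) : 'rV[F]_n := if insub k is Some kk then row kk P else 0.
have ProwE : forall kk : 'I_n, Prow kk = row kk P by move=> kk; rewrite /Prow valK.
have rowJP : forall k : 'I_n, row k (P *m N) =
    if ((k.+1 < n)%N && ~~ block_start m k.+1) then Prow k.+1 else 0.
  move=> k; rewrite PN row_mul mulmx_sum_row.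
  case: ifP => [/andP[hk hb]|hf].
    rewrite (bigD1 (Ordinal hk)) //= big1 ?addr0.
      by rewrite !mxE eqxx /= hb scale1r /Prow insubT.
    move=> j hj; rewrite !mxE (_ : (j == k.+1 :> nat) = false) ?scale0r //.
    by apply/negbTE; apply: contra hj => /eqP e; apply/eqP/val_inj.
  apply: big1 => j _; rewrite !mxE.
  case e: (j == k.+1 :> nat) => //=; last by rewrite scale0r.
  by move: hf; rewrite -(eqP e) ltn_ord /= => /negbFE ->; rewrite scale0r.
have Hs' : forall y : F, exists a : S, pi a == y.
  by move=> y; have [a ha] := Hsurj y; exists a; apply/eqP.
pose lf (y : F) : S := xchoose (Hs' y).
have lfE : forall y, pi (lf y) = y by move=> y; apply/eqP; exact: (xchooseP (Hs' y)).
pose lr (y : 'rV[F]_n) : 'rV[S]_n := \row_j lf (y 0 j).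
have lrE : forall y, map_mx pi (lr y) = y.
  by move=> y; apply/matrixP => i j; rewrite !mxE lfE (ord1 i).
pose b := fix b (k : nat) : 'rV[S]_n := match k with
  | 0 => lr (Prow 0)
  | k'.+1 => if block_start m k'.+1 then lr (Prow k'.+1) else b k' *m A end.
have bS : forall k, b k.+1 = if block_start m k.+1 then lr (Prow k.+1) else b k *m A by [].
have bP : forall k, (k < n)%N -> map_mx pi (b k) = Prow k.
  elim=> [|k IH] hk; first by rewrite /= lrE.
  rewrite bS; case: ifP => hbs; first by rewrite lrE.
  have hk' : (k < n)%N by apply: ltnW.
  rewrite map_mxM IH // -/N.
  have -> : Prow k = row (Ordinal hk') P := ProwE (Ordinal hk').
  by rewrite -row_mul rowJP /= hk hbs.
pose B : 'M[S]_n := \matrix_(k < n) b k.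
have rowB : forall k : 'I_n, row k B = b k by move=> k; rewrite rowK.
have mapB : map_mx pi B = P.
  by apply/row_matrixP => k; rewrite -map_row rowB bP // ProwE.
have Bunit : B \in unitmx.
  have hdet : pi (\det B) = \det P by rewrite -det_map_mx mapB.
  have dP : \det P != 0 by rewrite -unitfE -unitmxE.
  have dB0 : \det B != 0 by apply: contra dP => /eqP h; rewrite -hdet h rmorph0.
  have [k [u [hu e]]] := Hdvr _ dB0.
  case: k e => [|k] e; first by rewrite unitmxE e expr0 mulr1.
  have pl : pi l%:R = 0 by apply/Hker; exists 1; rewrite mul1r expr1.
  by move: dP; rewrite -hdet e rmorphM rmorphXn pl expr0n mulr0 eqxx.
pose w (i : 'I_r) : 'rV[S]_n := if (0 < m i)%N then b (st m i) else 0.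
have bw : forall (i : 'I_r) j, (j < m i)%N -> b (st m i + j)%N = w i *m A ^+ j.
  move=> i; elim=> [|j IH] hj.
    by rewrite addn0 /w (leq_trans _ hj) // expr0 mulmx1.
  rewrite addnS bS ifN; first by rewrite IH 1?ltnW // exprSr mulmxA.
  by apply: (@not_bs_inside _ m i); rewrite ltnS leq_addr /= -addnS ltn_add2l.
have Hrow : forall (i : 'I_r) (k : 'I_n), inb m i k -> row k B = w i *m A ^+ (k - st m i).
  move=> i k /andP[h1 h2]; rewrite rowB -bw; first by rewrite subnKC.
  by rewrite ltn_subLR.
have Hw0 : forall i, m i = 0%N -> w i = 0 by move=> i h; rewrite /w h.
pose A' := B *m A *m invmx B.
pose C := A' - Jm S m p q.
have bsn : block_start m n by rewrite /n -Htot -(st_ge m (leqnn r)) bs_st.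
have HC : forall k : 'I_n, ~~ block_start m k.+1 -> forall j, C k j = 0.
  move=> k hk j.
  have hk1 : (k.+1 < n)%N.
    rewrite ltn_neqAle ltn_ord andbT; apply/eqP => e; move: hk; by rewrite e bsn.
  have e1 : row k A' = delta_mx 0 (Ordinal hk1).
    rewrite /A' !row_mul rowB.
    have -> : b k *m A = b k.+1 by rewrite bS ifN.
    rewrite -(rowB (Ordinal hk1)).
    by rewrite -row_mul mulmxV // row1.
  have -> : C k j = (row k A') ord0 j - Jm S m p q k j by rewrite /C !mxE.
  rewrite e1 !mxE eqxx /=.
  case: (eqVneq (val j) k.+1) => [e|ne].
    rewrite e hk /=; have -> : j = Ordinal hk1 by apply: val_inj.
    by rewrite eqxx subrr.
  rewrite andFb (_ : (j == Ordinal hk1) = false) ?subrr //.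
  by apply/negbTE; apply: contra ne => /eqP ->.
have [psi [psi_inj psi_nl]] := psi_exists Hpr Hp Htot.
have hdet := det_main Hpr Hp Htot psi_inj psi_nl HC.
have eA' : Jm S m p q + C = A' by rewrite /C addrC subrK.
rewrite eA' char_poly_conj // in hdet.
pose X := Xk m A B w.
have Clast : forall (i : 'I_p) bb, C (lastp Hpr Hp Htot i) bb = cv m A B w (wd Hpr i) 0 bb.
  move=> i bb.
  have -> : C (lastp Hpr Hp Htot i) bb =
     (row (lastp Hpr Hp Htot i) A') ord0 bb - Jm S m p q (lastp Hpr Hp Htot i) bb by rewrite /C !mxE.
  have -> : Jm S m p q (lastp Hpr Hp Htot i) bb = 0.
    rewrite !mxE; case: (eqVneq (val bb) (lastp Hpr Hp Htot i).+1) => [e|ne]; last by rewrite andFb.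
    by rewrite e bs_lastS.
  rewrite subr0 /A' !row_mul (Hrow (wd Hpr i)); last by rewrite inb_last.
  congr (_ 0 bb); rewrite /cv -[w _ *m _ *m A]mulmxA mulmxE -exprSr.
  congr (_ *m _ ^+ _ *m _); rewrite /=.
  by have := mw_gt0 Hpr Hp i; case: (m (wd Hpr i)) => // k _; rewrite addnS /= addKn.
have detX : \det X = char_poly A.
  rewrite hdet -det_tr (det_restrict Hpr).
    congr (\det _); apply/matrixP => i j; rewrite !mxE; congr (_ - _).
      by rewrite (_ : (widen_ord Hpr j == widen_ord Hpr i) = (i == j)) // -val_eqE /= eq_sym.
    by apply: eq_bigr => bb _; rewrite Clast; congr (_ * _); rewrite mxE.
  move=> i j hij; rewrite !mxE.
  have mi0 : (p <= i)%N -> m i = 0%N by rewrite leqNgt Hp lt0n negbK => /eqP.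
  have mj0 : (p <= j)%N -> m j = 0%N by rewrite leqNgt Hp lt0n negbK => /eqP.
  case/orP: hij => h.
    rewrite big1; last by move=> bb _; rewrite cv0 // ?mi0 // mxE polyC0 mul0r.
    by rewrite subr0 mi0 // expr0 mulr1 eq_sym.
  rewrite big1; last first.
    move=> bb _; rewrite /Ur /inb mj0 // addn0.
    by case: leqP => h2 //=; rewrite ?(ltnNge bb) ?h2 /= mul0r mulr0.
  rewrite subr0 eq_sym; case: (eqVneq i j) => [->|_]; last by rewrite mul0r.
  by rewrite mj0 // expr0 mulr1.
have cvpi : forall i bb, pi (cv m A B w i 0 bb) = 0.
  move=> i bb; case: (eqVneq (m i) 0%N) => [h0|hnz]; first by rewrite cv0 // mxE rmorph0.
  have hm1 : ((m i).-1 < m i)%N by rewrite prednK // lt0n.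
  have hl : (st m i + (m i).-1 < n)%N.
    rewrite /n -Htot (leq_trans _ (st_le_tot m i.+1)) // stS ltn_add2l //.
  have e : w i *m A ^+ (m i) = b (st m i + (m i).-1)%N *m A.
    by rewrite bw // -mulmxA mulmxE -exprSr prednK // lt0n.
  have : map_mx pi (cv m A B w i) = 0.
    rewrite /cv e !map_mxM bP // -/N.
    have -> : Prow (st m i + (m i).-1)%N = row (Ordinal hl) P := ProwE (Ordinal hl).
    rewrite -row_mul rowJP /=.
    have -> : block_start m (st m i + (m i).-1).+1.
      by rewrite -addnS prednK ?lt0n // -stS bs_st.
    by rewrite andbF !mul0mx.
  by move/matrixP => /(_ 0 bb); rewrite !mxE.
have Xmod : map_mx (map_poly pi) X = \matrix_(i < r, j < r) ((i == j)%:R * 'X^(m i)).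
  apply/matrixP => k i; rewrite !mxE rmorphB rmorph_sum /= big1; last first.
    by move=> bb _; rewrite rmorphM /= map_polyC /= cvpi polyC0 mul0r.
  rewrite subr0 rmorphM /= rmorph_nat map_polyXn.
  by case: (eqVneq k i) => [->|]; rewrite ?mul0r.
have kerX := ker_iff Htot Bunit Hrow Hw0.
have hy : forall i : 'I_r, exists y, f1 *: (delta_mx i 0 : 'cV[{poly S}]_r) = X *m y.
  move=> i; apply/kerX; rewrite /phi (bigD1 i) //= big1 ?addr0.
    by rewrite !mxE eqxx mulr1 HA.
  by move=> k hk; rewrite !mxE (negbTE hk) mulr0 pact0.
have [yf hyf] := fin_all_exists hy.
pose Y : 'M[{poly S}]_r := \matrix_(k, i) yf i k 0.
have XY : X *m Y = f1%:M.
  apply/matrixP => a i.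
  transitivity ((X *m yf i) a 0).
    by rewrite !mxE; apply: eq_bigr => k _; rewrite /Y mxE.
  by rewrite -hyf !mxE eqxx andbT mulr_natr.
have dX : \det X != 0 by rewrite detX monic_neq0 // char_poly_monic.
have YX : Y *m X = f1%:M.
  apply/eqP; rewrite -subr_eq0; apply/eqP.
  set Z := Y *m X - f1%:M.
  have XZ : X *m Z = 0.
    by rewrite /Z mulmxBr mulmxA XY mul_scalar_mx mul_mx_scalar subrr.
  have : \adj X *m (X *m Z) = 0 by rewrite XZ mulmx0.
  rewrite mulmxA mul_adj_mx mul_scalar_mx => /matrixP h.
  apply/matrixP => i j; have := h i j; rewrite !mxE => /eqP.
  by rewrite mulf_eq0 (negbTE dX) /= => /eqP.
exists X, Y; split => //.
exists w => ph; split.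
  by move=> u; exact: (surj Htot Bunit Hrow u).
by move=> q0; exact: (kerX q0).
Qed.
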